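(* Let $\gamma>0$ and assume the minimum norm solution $\mathbf{u}^*=\mathbf{A}^\dagger\mathbf{b}$ satisfies $\mathbf{L}\mathbf{u}^*=\mathbf{g}$. Let $\tilde{\mathbf{b}}\in\mathbb{R}^m$ and let $\tilde{\mathbf{u}}^*_\gamma$ be a solution of $$\big((\mathbf{I}+\gamma\mathbf{A}^t\mathbf{A})\mathbf{A}^t\mathbf{A}+\gamma\mathbf{L}^t\mathbf{L}\big)\tilde{\mathbf{u}}^*_\gamma=(\mathbf{I}+\gamma\mathbf{A}^t\mathbf{A})\mathbf{A}^t\tilde{\mathbf{b}}+\gamma\mathbf{L}^t\mathbf{g},$$ and assume the same system with $\tilde{\mathbf{b}}$ replaced by $\mathbf{b}$ has a unique solution. Then $$\|\mathbf{A}\mathbf{u}^*-\mathbf{A}\tilde{\mathbf{u}}^*_\gamma\|_m\le\|(\mathbf{I}+\gamma\mathbf{A}\mathbf{A}^t)(\mathbf{b}-\tilde{\mathbf{b}})\|_m.$$ Moreover, if $m\ge n$ and $\mathbf{A}$ has full column rank $n$, then $$\|\mathbf{u}^*-\tilde{\mathbf{u}}^*_\gamma\|_n\le\frac{1}{\sqrt{\lambda_n}}\|(\mathbf{I}+\gamma\mathbf{A}\mathbf{A}^t)(\mathbf{b}-\tilde{\mathbf{b}})\|_m,$$ where $\lambda_n>0$ is the smallest eigenvalue of $\mathbf{A}^t\mathbf{A}$.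
   Context: $\mathbf{A}\in\mathbb{R}^{m\times n}$, $\mathbf{b}\in\mathbb{R}^m$, $\mathbf{L}\in\mathbb{R}^{p\times n}$, $\mathbf{g}\in\mathbb{R}^p$; $\mathbf{A}^\dagger$ is the Moore–Penrose pseudoinverse; $\|\cdot\|_m,\|\cdot\|_n$ are Euclidean norms; $\mathbf{I}$ denotes identity matrices of appropriate sizes. *)

(* Defs.v *)
From HB Require Import structures.
From mathcomp Require Import all_boot all_order all_algebra.
Set Implicit Arguments. Unset Strict Implicit. Unset Printing Implicit Defensive.
Import Order.TTheory GRing.Theory Num.Theory.
Local Open Scope ring_scope.

Definition enorm (R : rcfType) (k : nat) (v : 'cV[R]_k) : R :=
  Num.sqrt (\sum_(i < k) (v i 0) ^+ 2).

(* X is the Moore-Penrose pseudoinverse of A (the four Penrose conditions;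
   such an X exists and is unique). *)
Definition is_MP_pinv (R : rcfType) (m n : nat)
  (A : 'M[R]_(m, n)) (X : 'M[R]_(n, m)) : Prop :=
  [/\ A *m X *m A = A, X *m A *m X = X,
      (A *m X)^T = A *m X & (X *m A)^T = X *m A].

(* Main.v *)
Require Import Defs.
From HB Require Import structures.
From mathcomp Require Import all_boot all_order all_algebra.
From mathcomp Require Import sesquilinear spectral complex.
From mathcomp Require Import ring lra.
Import Order.TTheory GRing.Theory Num.Theory Num.Def.
Set Implicit Arguments. Unset Strict Implicit.
Local Open Scope ring_scope.
Local Open Scope sesquilinear_scope.
Definition dot (R : rcfType) (k : nat) (v w : 'cV[R]_k) : R := (v^T *m w) 0 0.
Arguments dot {R k}.

Lemma dotE (R : rcfType) k (v w : 'cV[R]_k) : dot v w = \sum_i v i 0 * w i 0.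
Proof. by rewrite /dot mxE; apply: eq_bigr => i _; rewrite mxE. Qed.

Lemma dot_mul (R : rcfType) k l (v : 'cV[R]_k) (B : 'M[R]_(k, l)) w :
  dot v (B *m w) = dot (B^T *m v) w.
Proof. by rewrite /dot trmx_mul trmxK mulmxA. Qed.

Lemma dotC (R : rcfType) k (v w : 'cV[R]_k) : dot v w = dot w v.
Proof. by rewrite !dotE; apply: eq_bigr => i _; rewrite mulrC. Qed.

Lemma dotDr (R : rcfType) k (v w z : 'cV[R]_k) : dot v (w + z) = dot v w + dot v z.
Proof. by rewrite /dot mulmxDr mxE. Qed.

Lemma dotBr (R : rcfType) k (v w z : 'cV[R]_k) : dot v (w - z) = dot v w - dot v z.
Proof. by rewrite /dot mulmxBr !mxE. Qed.

Lemma dotZr (R : rcfType) k (v w : 'cV[R]_k) a : dot v (a *: w) = a * dot v w.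
Proof. by rewrite /dot -scalemxAr mxE. Qed.

Lemma dot_ge0 (R : rcfType) k (v : 'cV[R]_k) : 0 <= dot v v.
Proof. by rewrite dotE; apply: sumr_ge0 => i _; rewrite -expr2 sqr_ge0. Qed.

Lemma dot_eq0 (R : rcfType) k (v : 'cV[R]_k) : dot v v = 0 -> v = 0.
Proof.
rewrite dotE => Hs; apply/matrixP => i j; rewrite ord1 mxE.
have Hn : forall l : 'I_k, true -> 0 <= v l 0 * v l 0.
  by move=> l _; rewrite -expr2 sqr_ge0.
have H0 : v i 0 * v i 0 = 0 := psumr_eq0P Hn Hs isT.
by move/eqP: H0; rewrite mulf_eq0 orbb => /eqP.
Qed.

Lemma enormE (R : rcfType) k (v : 'cV[R]_k) : enorm v = Num.sqrt (dot v v).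
Proof. by rewrite /enorm dotE; congr Num.sqrt; apply: eq_bigr => i _; rewrite expr2. Qed.

Lemma dot_cmp (R : rcfType) k (a d : 'cV[R]_k) :
  dot a a <= dot a d -> dot a a <= dot d d.
Proof.
move=> H; have := dot_ge0 (d - a).
rewrite dotBr (dotC (d - a) d) (dotC (d - a) a) !dotBr (dotC d a).
lra.
Qed.

Lemma quad_diag (C : numClosedFieldType) k (D : 'rV[C]_k) (v : 'cV[C]_k) :
  ((v ^t*) *m diag_mx D *m v) 0 0 = \sum_i D 0 i * (v i 0 * (v i 0)^*).
Proof.
rewrite mxE; apply: eq_bigr => i _.
by rewrite mul_mx_diag !mxE mulrAC mulrC [conjC _ * _]mulrC.
Qed.

Lemma quad_id (C : numClosedFieldType) k (v : 'cV[C]_k) :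
  ((v ^t*) *m v) 0 0 = \sum_i (v i 0 * (v i 0)^*).
Proof.
rewrite mxE; apply: eq_bigr => i _.
by rewrite !mxE mulrC.
Qed.

Lemma rayleigh (R : rcfType) n (M : 'M[R]_n) (lam : R) :
  M^T = M -> (forall mu, eigenvalue M mu -> lam <= mu) ->
  forall x : 'cV[R]_n, lam * dot x x <= dot x (M *m x).
Proof.
move=> MT Hlam x.
pose f := real_complex R.
pose Mc := map_mx f M.
have Mreal : Mc \is a realmx.
  by apply/mxOverP => i j; rewrite mxE; apply/complex_realP; eexists.
have Msym : Mc \is symmetricmx.
  apply/is_hermitianmxP; rewrite expr0 scale1r map_mx_id // /Mc.
  by rewrite map_trmx MT.
have Mherm := realsym_hermsym Msym Mreal.
have /orthomx_spectralP Mdec := hermitian_normalmx Mherm.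
have Pu := spectral_unitarymx Mc.
rewrite invmx_unitary // in Mdec.
have Dreal := hermitian_spectral_diag_real Mherm.
set P := spectralmx Mc in Mdec Pu.
set D := spectral_diag Mc in Mdec Dreal.
have PP : P *m P ^t* = 1%:M by apply/unitarymxP.
have PP' : P ^t* *m P = 1%:M by apply: mulmx1C.
have HD : forall i, (lam%:C)%C <= D 0 i.
  move=> i; have Di_real : D 0 i \is Num.real by apply: (mxOverP Dreal).
  have [k Dk] := complex_realP _ Di_real.
  rewrite Dk lecR; apply: Hlam.
  rewrite eigenvalue_root_char -(fmorph_root f) map_char_poly.
  suff: root (char_poly Mc) (D 0 i) by rewrite Dk.
  rewrite -eigenvalue_root_char.
  apply/eigenvalueP; exists (row i P).
    rewrite -row_mul Mdec !mulmxA PP mul1mx mul_diag_mx.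
    by apply/rowP => j; rewrite !mxE.
  apply/eqP => /(congr1 (mulmx^~ (P ^t*))); rewrite -row_mul PP mul0mx.
  by move/rowP/(_ i); rewrite !mxE eqxx /= => /eqP; rewrite oner_eq0.
pose xc := map_mx f x.
pose y := P *m xc.
have xreal : xc^T \is a realmx.
  by apply/mxOverP => i j; rewrite !mxE; apply/complex_realP; eexists.
have ytE : y ^t* = xc^T *m P ^t*.
  by rewrite /y trmx_mul map_mxM (realmxC xreal).
have fdot : forall (v w : 'cV[R]_n), f (dot v w) = ((map_mx f v)^T *m map_mx f w) 0 0.
  by move=> v w; rewrite /dot map_trmx -map_mxM [in RHS]mxE.
have E1 : f (dot x (M *m x)) = \sum_i D 0 i * (y i 0 * (y i 0)^*).
  by rewrite fdot map_mxM -/Mc -/xc Mdec -quad_diag ytE /y !mulmxA.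
have E2 : f (dot x x) = \sum_i (y i 0 * (y i 0)^*).
  by rewrite fdot -/xc -quad_id ytE /y !mulmxA -(mulmxA _ _ P) PP' mulmx1.
have : f (lam * dot x x) <= f (dot x (M *m x)).
  have fM : f (lam * dot x x) = f lam * f (dot x x) by exact: (rmorphM (real_complex R)).
  rewrite fM E2 E1 mulr_sumr; apply: ler_sum => i _.
  by apply: ler_wpM2r; [exact: mul_conjC_ge0 | exact: HD].
by rewrite lecR.
Qed.

Theorem corollary1 (R : rcfType) (m n p : nat)
  (A : 'M[R]_(m, n)) (b : 'cV[R]_m) (L : 'M[R]_(p, n)) (g : 'cV[R]_p)
  (Adag : 'M[R]_(n, m)) (gamma : R) (bt : 'cV[R]_m) (ut : 'cV[R]_n) :
  is_MP_pinv A Adag ->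
  0 < gamma ->
  L *m (Adag *m b) = g ->
  ((1%:M + gamma *: (A^T *m A)) *m (A^T *m A) + gamma *: (L^T *m L)) *m ut
    = (1%:M + gamma *: (A^T *m A)) *m (A^T *m bt) + gamma *: (L^T *m g) ->
  (exists! u : 'cV[R]_n,
    ((1%:M + gamma *: (A^T *m A)) *m (A^T *m A) + gamma *: (L^T *m L)) *m u
      = (1%:M + gamma *: (A^T *m A)) *m (A^T *m b) + gamma *: (L^T *m g)) ->
  enorm (A *m (Adag *m b) - A *m ut)
    <= enorm ((1%:M + gamma *: (A *m A^T)) *m (b - bt))
  /\
  ((n <= m)%N -> \rank A = n ->
   forall lam : R,
     eigenvalue (A^T *m A) lam ->
     (forall mu : R, eigenvalue (A^T *m A) mu -> lam <= mu) ->
     enorm (Adag *m b - ut)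
       <= (Num.sqrt lam)^-1 * enorm ((1%:M + gamma *: (A *m A^T)) *m (b - bt))).
Proof.
case=> h1 h2 h3 h4 gpos Lus.
have hAd : A^T *m A *m Adag = A^T.
  by rewrite -mulmxA -h3 -trmx_mul h1.
set M := A^T *m A.
have MT : M^T = M by rewrite /M trmx_mul trmxK.
set us := Adag *m b.
have Mus : M *m us = A^T *m b by rewrite /M /us mulmxA hAd.
set P := 1%:M + gamma *: M.
set Q := P *m M + gamma *: (L^T *m L).
set d := (1%:M + gamma *: (A *m A^T)) *m (b - bt).
move=> hut _.
set e := us - ut.
have PAt : P *m A^T = A^T *m (1%:M + gamma *: (A *m A^T)).
  by rewrite /P /M mulmxDl mulmxDr mul1mx mulmx1 -scalemxAl -scalemxAr !mulmxA.
have Qus : Q *m us = P *m (A^T *m b) + gamma *: (L^T *m g).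
  by rewrite /Q mulmxDl -mulmxA Mus -scalemxAl -mulmxA Lus.
have Qe : Q *m e = A^T *m d.
  rewrite /e mulmxBr Qus hut opprD addrACA subrr addr0.
  have E : P *m (A^T *m b - A^T *m bt) = A^T *m d.
    by rewrite /d mulmxA -PAt -mulmxA [in RHS]mulmxBr.
  by rewrite -E mulmxBr.
have e1 : dot e (M *m e) = dot (A *m e) (A *m e) by rewrite /M -mulmxA dot_mul trmxK.
have e2 : dot e (M *m M *m e) = dot (M *m e) (M *m e) by rewrite -mulmxA dot_mul MT.
have e3 : dot e (L^T *m L *m e) = dot (L *m e) (L *m e) by rewrite -mulmxA dot_mul trmxK.
have QeE : Q *m e = M *m e + gamma *: (M *m M *m e) + gamma *: (L^T *m L *m e).
  by rewrite /Q /P !mulmxDl mul1mx -!scalemxAl.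
have key : dot (A *m e) (A *m e) + gamma * dot (M *m e) (M *m e)
    + gamma * dot (L *m e) (L *m e) = dot (A *m e) d.
  have -> : dot (A *m e) d = dot e (Q *m e) by rewrite Qe dot_mul trmxK.
  by rewrite QeE !dotDr !dotZr e1 e2 e3.
have ha : dot (A *m e) (A *m e) <= dot (A *m e) d.
  have := dot_ge0 (M *m e); have := dot_ge0 (L *m e).
  have := gpos; rewrite -key => g0 h5 h6.
  have := mulr_ge0 (ltW g0) h5; have := mulr_ge0 (ltW g0) h6. lra.
have hda := dot_cmp ha.
have Ae : A *m us - A *m ut = A *m e by rewrite mulmxBr.
split; first by rewrite Ae !enormE ler_sqrt ?dot_ge0.
move=> _ rk lam Hl Hmin.
have lampos : 0 < lam.
  case/eigenvalueP: Hl => v Hv v0.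
  pose w := v^T.
  have Mw : M *m w = lam *: w by rewrite /w -MT -trmx_mul Hv linearZ.
  have w0 : 0 < dot w w.
    rewrite lt0r dot_ge0 andbT; apply/eqP => /dot_eq0 H.
    by move: v0; rewrite -(trmxK v) -/w H trmx0 eqxx.
  have Aw0 : 0 < dot (A *m w) (A *m w).
    rewrite lt0r dot_ge0 andbT; apply/eqP => /dot_eq0 H.
    have : v *m A^T = 0 by rewrite -(trmxK v) -/w -trmx_mul H trmx0.
    move/eqP; rewrite mulmx_free_eq0 ?(negbTE v0) //.
    by rewrite /row_free mxrank_tr rk.
  have E : dot (A *m w) (A *m w) = lam * dot w w.
    by rewrite -{1}(trmxK A) -dot_mul mulmxA -/M Mw dotZr.
  by move: Aw0; rewrite E pmulr_lgt0.
have := rayleigh MT Hmin e; rewrite e1 => hr.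
rewrite enormE -/e enormE ler_pdivlMl ?sqrtr_gt0 //.
rewrite -sqrtrM ?ler_sqrt ?dot_ge0 //; last exact: ltW.
exact: le_trans hr hda.
Qed.
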